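(* Let $k\ge 3$ be an integer and let $G\in\mathcal{F}_v(k-1,k-1;k)$ with $|V(G)|=F_v(k-1,k-1;k)$. Let $f(G)$ be the largest number of vertices of a $K_{k-1}$-free induced subgraph of $G$. Then $$F_v(J_k,J_k;k)\le 3F_v(k-1,k-1;k)-f(G).$$
   Context: All graphs are finite and simple. $J_n$ denotes $K_n$ with one edge removed. An integer $a$ used in place of a graph denotes $K_a$. ''A graph $F$ contains $H$'' means $F$ has a (not necessarily induced) subgraph isomorphic to $H$. $G\rightarrow(H_1,H_2)^v$ means: for every partition $V(G)=X_1\cup X_2$ there is $i$ such that the subgraph induced by $X_i$ contains $H_i$. $\mathcal{F}_v(H_1,H_2;k)$ is the set of $K_k$-free graphs $G$ with $G\rightarrow(H_1,H_2)^v$, and $F_v(H_1,H_2;k)$ is the minimum number of vertices of a graph in this set. *)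

(* Defs.v *)
From mathcomp Require Import all_boot.
Set Implicit Arguments. Unset Strict Implicit. Unset Printing Implicit Defensive.

Definition simple_graph (V : finType) (e : rel V) : Prop :=
  irreflexive e /\ symmetric e.

Definition Kg (n : nat) : rel 'I_n := fun i j => i != j.

(* J_n : K_n with the edge {0,1} removed. *)
Definition Jg (n : nat) : rel 'I_n :=
  fun i j => (i != j) && ~~ ((val i <= 1) && (val j <= 1)).

(* The subgraph of (V,e) induced by X contains (W,h) (not necessarily induced):
   an injective map W -> X sending edges to edges. *)
Definition contains_in (W V : finType) (h : rel W) (e : rel V) (X : {set V}) : bool :=
  [exists f : {ffun W -> V},
     [&& injectiveb f, [forall w, f w \in X] &
         [forall a, forall b, h a b ==> e (f a) (f b)]]].

Definition Kfree (V : finType) (e : rel V) (k : nat) : Prop :=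
  ~~ contains_in (@Kg k) e setT.

Definition varrows (V W1 W2 : finType) (e : rel V) (h1 : rel W1) (h2 : rel W2) : Prop :=
  forall X : {set V}, contains_in h1 e X \/ contains_in h2 e (~: X).

Definition inFv (V W1 W2 : finType) (e : rel V) (h1 : rel W1) (h2 : rel W2) (k : nat) : Prop :=
  simple_graph e /\ Kfree e k /\ varrows e h1 h2.

Definition fmax (V : finType) (e : rel V) (a : nat) : nat :=
  \max_(S : {set V} | ~~ contains_in (@Kg a) e S) #|S|.
Arguments Kg n : clear implicits.
Arguments Jg n : clear implicits.

(* Main.v *)
Require Import Defs.
From mathcomp Require Import all_boot.
From mathcomp Require Import zify.

Lemma blow_Kfree (V U : finType) (e : rel V) (b : U -> V) k :
  irreflexive e -> Kfree e k -> Kfree (fun x y => e (b x) (b y)) k.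
Proof.
move=> irr; rewrite /Kfree; apply: contra => /existsP [f /and3P [/injectiveP finj _ /forallP fE]].
apply/existsP; exists [ffun w => b (f w)]; apply/and3P; split.
- apply/injectiveP => w1 w2; rewrite !ffunE => H.
  case: (eqVneq w1 w2) => // ne.
  have := implyP (forallP (fE w1) w2) ne; by rewrite /= H irr.
- by apply/forallP => w; rewrite in_setT.
- apply/forallP => a; apply/forallP => c; apply/implyP => H; rewrite !ffunE.
  exact: (implyP (forallP (fE a) c) H).
Qed.

Lemma mkJ (V U : finType) (e : rel V) (b : U -> V) m (Z : {set U})
  (g : 'I_m.+2 -> V) (i0 : 'I_m.+2) :
  injective g -> (forall i j, i != j -> e (g i) (g j)) ->
  1 < #|Z :&: [set x | b x == g i0]| ->
  (forall i, 0 < #|Z :&: [set x | b x == g i]|) ->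
  contains_in (Jg m.+3) (fun x y => e (b x) (b y)) Z.
Proof.
move=> ginj gE /card_gt1P [u1 [u2 [Hu1 Hu2 Hne]]] Hp.
have pE : forall i, exists x, x \in Z :&: [set x | b x == g i].
  by move=> i; apply/set0Pn; rewrite -card_gt0 Hp.
have [p Hpp] := fin_all_exists pE.
pose t (j : 'I_m.+3) : 'I_m.+2 :=
  if j <= 1 then i0 else lift i0 (inord (j - 2) : 'I_m.+1).
have tP : forall j j' : 'I_m.+3, ~~ ((j <= 1) && (j' <= 1)) -> t j = t j' -> j = j'.
  move=> j j' Hjj'; rewrite /t.
  case: (leqP j 1) Hjj' => Hj; case: (leqP j' 1) => Hj' //= _.
  - by move=> H; move: (neq_lift i0 (inord (j' - 2) : 'I_m.+1)); rewrite -H eqxx.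
  - by move=> H; move: (neq_lift i0 (inord (j - 2) : 'I_m.+1)); rewrite H eqxx.
  - move/lift_inj/(congr1 val) => /=; rewrite !inordK; last 2 first.
      by have := ltn_ord j'; lia.
      by have := ltn_ord j; lia.
    by move=> H; apply: ord_inj; lia.
move: Hu1 Hu2; rewrite !inE => /andP [Hu1Z /eqP Hb1] /andP [Hu2Z /eqP Hb2].
pose F := [ffun j : 'I_m.+3 => if val j == 0 then u1 else if val j == 1 then u2 else p (t j)].
have bF : forall j, b (F j) = g (t j).
  move=> j; rewrite ffunE.
  case: ifP => [/eqP H0|_].
    by rewrite /t (_ : nat_of_ord j <= 1) //; move: H0 => /= ->.
  case: ifP => [/eqP H0|_].
    by rewrite /t (_ : nat_of_ord j <= 1) //; move: H0 => /= ->.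
  by have := Hpp (t j); rewrite !inE => /andP [_ /eqP ->].
apply/existsP; exists F; apply/and3P; split.
- apply/injectiveP => j j' H.
  have Ht : t j = t j' by apply: ginj; rewrite -!bF H.
  case Hb: ((j <= 1) && (j' <= 1)); last by apply: tP => //; rewrite Hb.
  move: Hb H => /andP [Hj Hj']; rewrite !ffunE.
  move=> H; apply: ord_inj; move: H => /=.
  move: (nat_of_ord j) (nat_of_ord j') Hj Hj' => [|[|x]] [|[|y]] //= _ _ E.
  + by rewrite E eqxx in Hne.
  + by rewrite E eqxx in Hne.
- apply/forallP => j; rewrite ffunE.
  case: ifP => _ //; case: ifP => _ //.
  by have := Hpp (t j); rewrite !inE => /andP [].
- apply/forallP => a; apply/forallP => c; apply/implyP => /andP [Hac Hn].
  rewrite /= !bF; apply: gE; apply/eqP => H; move: Hac; by rewrite (tP _ _ Hn H) eqxx.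
Qed.

Lemma core (V U : finType) (e : rel V) (b : U -> V) (A : {set V}) m :
  varrows e (Kg m.+2) (Kg m.+2) ->
  ~~ contains_in (Kg m.+2) e A ->
  (forall v, 1 < #|[set x | b x == v]|) ->
  (forall v, v \notin A -> 2 < #|[set x | b x == v]|) ->
  varrows (fun x y => e (b x) (b y)) (Jg m.+3) (Jg m.+3).
Proof.
move=> Harr HA Hf2 Hf3 X.
have cardID : forall v, #|[set x | b x == v]| =
   #|X :&: [set x | b x == v]| + #|~: X :&: [set x | b x == v]|.
  by move=> v; rewrite -(cardsID X [set x | b x == v]) setDE (setIC _ X) (setIC _ (~: X)).
case: (Harr [set v | 1 < #|X :&: [set x | b x == v]|]) =>
   /existsP [g /and3P [/injectiveP ginj /forallP gS /forallP gE]].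
  have gE' : forall i j, i != j -> e (g i) (g j).
    by move=> i j H; exact: (implyP (forallP (gE i) j) H).
  left; apply: (@mkJ _ _ e b m X g ord0) => //.
    by have := gS ord0; rewrite inE.
  by move=> i; have := gS i; rewrite inE => /ltnW.
have gE' : forall i j, i != j -> e (g i) (g j).
  by move=> i j H; exact: (implyP (forallP (gE i) j) H).
have gS' : forall i, #|X :&: [set x | b x == g i]| <= 1.
  by move=> i; have := gS i; rewrite !inE -leqNgt.
case: (boolP [exists i, 1 < #|~: X :&: [set x | b x == g i]|]).
  move=> /existsP [i0 Hi0]; right; apply: (@mkJ _ _ e b m (~: X) g i0) => //.
  move=> i; have := Hf2 (g i); have := gS' i; rewrite cardID; lia.
move=> Hno; exfalso; move/negP: HA; apply.
apply/existsP; exists g; apply/and3P; split.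
- by apply/injectiveP.
- apply/forallP => i; apply/negPn/negP => Hi.
  have := Hf3 _ Hi; rewrite cardID.
  have := gS' i; have : #|~: X :&: [set x | b x == g i]| <= 1.
    by rewrite leqNgt; apply/negP => H; move/negP: Hno; apply; apply/existsP; exists i.
  lia.
- by apply/forallP => i; apply/forallP => j; exact: (forallP (gE i) j).
Qed.

Theorem mainTheorem6 (k : nat) (hk : 3 <= k) (V : finType) (e : rel V)
  (hG : inFv e (Kg (k - 1)) (Kg (k - 1)) k)
  (hmin : forall (n : nat) (h : rel 'I_n),
            inFv h (Kg (k - 1)) (Kg (k - 1)) k -> #|V| <= n) :
  exists (n : nat) (h : rel 'I_n),
    inFv h (Jg k) (Jg k) k /\ n <= 3 * #|V| - fmax e (k - 1).
Proof.
have [m Em] : exists m, k = m.+3 by exists (k - 3); lia.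
subst k; clear hmin.
change (m.+3 - 1) with m.+2 in hG |- *.
case: hG => [[irr sym] [Kf arr]].
have [A HA Amax] : exists2 A : {set V}, ~~ contains_in (Kg m.+2) e A & #|A| = fmax e m.+2.
  have [|A HA HM] := @eq_bigmax_cond _ [pred S : {set V} | ~~ contains_in (Kg m.+2) e S] (fun S => #|S|).
    apply/card_gt0P; exists set0; rewrite inE; apply/negP => /existsP [f /and3P [_ /forallP H _]].
    by have := H ord0; rewrite inE.
  by exists A => //; rewrite /fmax HM.
pose W := ((V * 'I_2) + {v : V | v \notin A})%type.
pose base (w : W) : V := match w with inl p => p.1 | inr s => val s end.
pose b (i : 'I_#|{: W}|) : V := base (enum_val i).
exists #|{: W}|, (fun i j => e (b i) (b j)); split; last first.
  rewrite card_sum card_prod !card_ord card_sig -Amax.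
  have -> : #|[pred x : V | x \notin A]| = #|~: A| by apply: eq_card => x; rewrite !inE.
  have := cardsC A; lia.
split; first by split => [x|x y]; [exact: irr | exact: sym].
split; first exact: blow_Kfree.
apply: (@core _ _ e b A m) => //.
- move=> v; apply/card_gt1P.
  exists (enum_rank (inl (v, ord0) : W)), (enum_rank (inl (v, ord_max) : W)).
  rewrite !inE /b !enum_rankK /= eqxx; split => //.
  by apply/eqP => /enum_rank_inj.
- move=> v Hv; rewrite (cardsD1 (enum_rank (inr (exist _ v Hv) : W))).
  rewrite inE /b enum_rankK /= eqxx add1n ltnS; apply/card_gt1P.
  exists (enum_rank (inl (v, ord0) : W)), (enum_rank (inl (v, ord_max) : W)).
  rewrite !inE /b !enum_rankK /= eqxx; split => //.
  + by apply/andP; split => //; apply/eqP => /enum_rank_inj.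
  + by apply/andP; split => //; apply/eqP => /enum_rank_inj.
  + by apply/eqP => /enum_rank_inj.
Qed.
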